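(* Let $T_i,T_j$ be indecomposable summands of a basic maximal rigid object $T$ of $\mathcal{C}_n$, and let $T_1$ be the top summand of $T$. The following are equivalent: (a) there is a nonzero $\mathcal{D}$-map $T_i\to T_j$; (b) either (b') there is a non-degenerate $T$-subwing triple $(T_x;T_y,T_z)$ such that $T_i$ is on the left edge of $\mathcal{W}_{T_z}$ and $T_j$ is on the right edge of $\mathcal{W}_{T_y}$, or (b'') $T_i$ is on the left edge of $\mathcal{W}_{T_1}$ and $T_j$ is on the right edge of $\mathcal{W}_{T_1}$.
   Context: Let $k$ be algebraically closed, $n\ge2$, $\mathcal{T}_n$ the tube of rank $n$ (finite-dimensional nilpotent representations of the cyclically oriented $\tilde A_{n-1}$-quiver; AR-translation $\tau$), $\mathcal{C}_n=D^b(\mathcal{T}_n)/\tau^{-1}[1]$ the cluster tube, with indecomposables identified with those of $\mathcal{T}_n$. Indecomposables have coordinates $(a,b)$, $a\in\mathbb{Z}/n$, $b\ge1$ the quasilength, with $\tau(a,b)=(a-1,b)$ and irreducible maps $(a,b)\to(a,b+1)$ and $(a,b)\to(a+1,b-1)$. For indecomposables $X,Y$, $\operatorname{Hom}_{\mathcal{C}_n}(X,Y)=\operatorname{Hom}_{\mathcal{T}_n}(X,Y)\oplus\operatorname{Hom}_{D^b}(X,\tau^{-1}Y[1])$, the second summand $\cong D\operatorname{Hom}_{\mathcal{T}_n}(Y,\tau^2X)$; its elements are $\mathcal{D}$-maps. For $X=(a,i)$, $i\le n-1$, the wing $\mathcal{W}_X=\{(a+s,i'):s\ge0,i'\ge1,s+i'\le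 i\}$ has left edge $\{(a,i'):1\le i'\le i\}$ and right edge $\{(a+i-i',i'):1\le i'\le i\}$. $T$ is maximal rigid if $\operatorname{Ext}^1_{\mathcal{C}_n}(T,T)=0$ and $\operatorname{Ext}^1(T\oplus X,T\oplus X)=0$ implies $X\in\operatorname{add}T$; a basic one has a unique summand $T_1$ (top summand) of quasilength $n-1$, and all summands lie in $\mathcal{W}_{T_1}$. A non-degenerate subwing triple $(X;Y,Z)$: $X=(a,b)$ with $3\le b\le n-1$, $Y=(a,c)$, $Z=(a+c+1,b-c-1)$ for some $1\le c\le b-2$; it is a $T$-subwing triple if $X,Y,Z$ are summands of $T$. *)

(* Defs.v *)
From mathcomp Require Import all_boot.
Set Implicit Arguments. Unset Strict Implicit. Unset Printing Implicit Defensive.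

(* An indecomposable is a pair (a, b) : nat * nat with a < n (a represents
   the class of a in Z/n) and b >= 1 (quasilength).
   Conventions (as in the paper): tau (a,b) = (a-1,b); irreducible maps
   (a,b) -> (a,b+1) (mono) and (a,b) -> (a+1,b-1) (epi).  Hence (a,b) is the
   uniserial module whose length-k submodule is (a,k) and whose length-k
   quotient is (a+b-k,k). *)

Definition ind := (nat * nat)%type.

Definition valid (n : nat) (X : ind) : bool := (X.1 < n) && (0 < X.2).

Definition tau (n : nat) (X : ind) : ind := ((X.1 + n.-1) %% n, X.2).

(* dim Hom_{T_n}(X, Y) for uniserial X, Y: the number of k, 1 <= k <= min(b,d),
   such that the length-k quotient (a+b-k, k) of X = (a,b) is isomorphic to the
   length-k submodule (c, k) of Y = (c,d). *)
Definition dimHomT (n : nat) (X Y : ind) : nat :=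
  count (fun k => X.1 + X.2 - k == Y.1 %[mod n]) (iota 1 (minn X.2 Y.2)).

Definition homT (n : nat) (X Y : ind) : bool := 0 < dimHomT n X Y.

(* Ext^1_{T_n}(X,Y) = D Hom_{T_n}(Y, tau X) (AR formula, hereditary). *)
Definition extT (n : nat) (X Y : ind) : bool := homT n Y (tau n X).

(* Ext^1_{C_n}(X,Y) = Ext^1_{T_n}(X,Y) (+) D Ext^1_{T_n}(Y,X). *)
Definition extC (n : nat) (X Y : ind) : bool := extT n X Y || extT n Y X.

(* There is a nonzero D-map X -> Y, i.e. Hom_{D^b}(X, tau^{-1} Y[1])
   = D Hom_{T_n}(Y, tau^2 X) is nonzero. *)
Definition Dmap (n : nat) (X Y : ind) : bool := homT n Y (tau n (tau n X)).

(* A basic object is represented by the duplicate-free list of its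
   indecomposable summands.  Ext^1 is additive, so Ext^1(T,T) = 0 iff
   Ext^1 vanishes on all pairs of summands. *)
Definition rigid (n : nat) (T : seq ind) : Prop :=
  forall X Y, X \in T -> Y \in T -> ~~ extC n X Y.

Definition basic_maximal_rigid (n : nat) (T : seq ind) : Prop :=
  all (valid n) T /\ uniq T /\ rigid n T /\
  (forall X, valid n X -> rigid n (X :: T) -> X \in T).

Definition left_edge (n : nat) (X Y : ind) : Prop :=
  Y.1 = X.1 /\ 1 <= Y.2 <= X.2.

Definition right_edge (n : nat) (X Y : ind) : Prop :=
  Y.1 = (X.1 + X.2 - Y.2) %% n /\ 1 <= Y.2 <= X.2.

Definition subwing_triple (n : nat) (X Y Z : ind) : Prop :=
  3 <= X.2 <= n.-1 /\
  exists c, 1 <= c <= X.2 - 2 /\ Y = (X.1, c) /\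
            Z = ((X.1 + c + 1) %% n, X.2 - c - 1).

Definition T_subwing_triple (n : nat) (T : seq ind) (X Y Z : ind) : Prop :=
  [/\ X \in T, Y \in T, Z \in T & subwing_triple n X Y Z].

(* Main.v *)
Require Import Defs.
From mathcomp Require Import all_boot.
From mathcomp Require Import zify.

Definition rl (n t u : nat) := (u + (n - t)) %% n.

Lemma rl_add n t u m : rl n t (u + m) = (rl n t u + m) %% n.
Proof. by rewrite /rl modnDml addnAC. Qed.

Lemma rl_mod n t u : rl n t (u %% n) = rl n t u.
Proof. by rewrite /rl modnDml. Qed.

Lemma rl_key n t w : t <= n -> (t + rl n t w) %% n = w %% n.
Proof.
move=> h; rewrite /rl modnDmr.
have -> : t + (w + (n - t)) = w + n by lia.
by rewrite modnDr.
Qed.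

Lemma rl_cong n t u v : t <= n -> (u %% n = v %% n) <-> rl n t u = rl n t v.
Proof.
move=> h; split => e.
  by rewrite -(rl_mod n t u) -(rl_mod n t v) e.
by rewrite -(rl_key n t u h) -(rl_key n t v h) e.
Qed.

Lemma rl_lt n t u : 0 < n -> rl n t u < n.
Proof. by move=> h; rewrite /rl ltn_pmod. Qed.

Lemma rl_inj n t u v : t <= n -> u < n -> v < n -> rl n t u = rl n t v -> u = v.
Proof.
move=> h hu hv /(rl_cong n t u v h); by rewrite !modn_small.
Qed.

Lemma rl_t n t : t <= n -> rl n t t = 0.
Proof. move=> h; rewrite /rl. have -> : t + (n - t) = n by lia. by rewrite modnn. Qed.

Lemma homT_iff n X Y : homT n X Y <->
  exists k, [/\ 0 < k, k <= X.2, k <= Y.2 & (X.1 + X.2 - k) %% n = Y.1 %% n].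
Proof.
rewrite /homT /dimHomT -has_count; split.
  move/hasP=> [k]; rewrite mem_iota => /andP[h1 h2] /eqP e.
  exists k; split => //; lia.
move=> [k [h1 h2 h3 e]]; apply/hasP; exists k; last by apply/eqP.
rewrite mem_iota; apply/andP; split; lia.
Qed.

Lemma homT_rel n t X Y : t <= n -> homT n X Y <->
  exists k, [/\ 0 < k, k <= X.2, k <= Y.2 & (rl n t X.1 + (X.2 - k)) %% n = rl n t Y.1].
Proof.
move=> h; rewrite homT_iff; split => -[k [h1 h2 h3 e]]; exists k; split => //.
  have ee : X.1 + X.2 - k = X.1 + (X.2 - k) by lia.
  rewrite -rl_add -ee; exact: (proj1 (rl_cong n t _ _ h) e).
have ee : X.1 + X.2 - k = X.1 + (X.2 - k) by lia.
apply: (proj2 (rl_cong n t _ _ h)); by rewrite ee rl_add.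
Qed.

Lemma rl_tau n t X : rl n t (tau n X).1 = (rl n t X.1 + n.-1) %% n.
Proof. by rewrite /tau /= rl_mod rl_add. Qed.

Lemma mod1 n r : 1 <= n -> r < n -> (r + n.-1) %% n = if 1 <= r then r - 1 else r + n - 1.
Proof.
move=> hn hr; case: ifP => h.
  have -> : r + n.-1 = (r - 1) + n by lia.
  rewrite modnDr modn_small //; lia.
rewrite modn_small; lia.
Qed.

Lemma mod2 n r : 2 <= n -> r < n -> (r + n.-1 + n.-1) %% n = if 2 <= r then r - 2 else r + n - 2.
Proof.
move=> hn hr; case: ifP => h.
  have -> : r + n.-1 + n.-1 = 2 * n + (r - 2) by lia.
  rewrite modnMDl modn_small //; lia.
have -> : r + n.-1 + n.-1 = (r + n - 2) + n by lia.
rewrite modnDr modn_small //; lia.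
Qed.

Lemma extT_wing n t X Y : 2 <= n -> t <= n ->
  rl n t X.1 + X.2 <= n.-1 -> 0 < X.2 -> rl n t Y.1 + Y.2 <= n.-1 -> 0 < Y.2 ->
  extT n X Y <-> (rl n t Y.1 < rl n t X.1 <= rl n t Y.1 + Y.2 /\
                  rl n t Y.1 + Y.2 < rl n t X.1 + X.2).
Proof.
move=> hn ht wx px wy py; rewrite /extT (homT_rel n t) // rl_tau mod1; [|lia|apply: rl_lt; lia].
have -> : (tau n X).2 = X.2 by [].
case: ifP => h; split.
- move=> [k [h1 h2 h3 e]]; rewrite modn_small in e; lia.
- move=> hh; exists (rl n t Y.1 + Y.2 + 1 - rl n t X.1); split; try lia.
  rewrite modn_small; lia.
- move=> [k [h1 h2 h3 e]]; rewrite modn_small in e; lia.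
- lia.
Qed.

Lemma Dmap_wing n t X Y : 2 <= n -> t <= n ->
  rl n t X.1 + X.2 <= n.-1 -> 0 < X.2 -> rl n t Y.1 + Y.2 <= n.-1 -> 0 < Y.2 ->
  Dmap n X Y <-> ((rl n t Y.1 + 2 <= rl n t X.1 <= rl n t Y.1 + Y.2 + 1 /\
                   rl n t Y.1 + Y.2 + 2 <= rl n t X.1 + X.2) \/
                  (rl n t X.1 = 0 /\ rl n t Y.1 + Y.2 = n.-1)).
Proof.
move=> hn ht wx px wy py; rewrite /Dmap (homT_rel n t) // !rl_tau modnDml /= mod2 //; last by apply: rl_lt; lia.
case: ifP => h; split.
- move=> [k [h1 h2 h3 e]]; rewrite modn_small in e; lia.
- move=> [hh|hh]; last lia.
  exists (rl n t Y.1 + Y.2 + 2 - rl n t X.1); split; try lia.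
  rewrite modn_small; lia.
- move=> [k [h1 h2 h3 e]]; rewrite modn_small in e; lia.
- move=> [hh|hh]; first lia.
  exists 1; split; try lia.
  rewrite modn_small; lia.
Qed.
Lemma rl_shift n t u m : rl n t ((u + m) %% n) = (rl n t u + m) %% n.
Proof. by rewrite rl_mod rl_add. Qed.

Lemma noC n t U V : 2 <= n -> t <= n ->
  rl n t U.1 + U.2 <= n.-1 -> 0 < U.2 -> rl n t V.1 + V.2 <= n.-1 -> 0 < V.2 ->
  ~ (rl n t V.1 < rl n t U.1 <= rl n t V.1 + V.2 /\ rl n t V.1 + V.2 < rl n t U.1 + U.2) ->
  ~ (rl n t U.1 < rl n t V.1 <= rl n t U.1 + U.2 /\ rl n t U.1 + U.2 < rl n t V.1 + V.2) ->
  ~~ extC n U V.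
Proof.
move=> hn ht wu pu wv pv h1 h2; rewrite /extC negb_or; apply/andP; split; apply/negP.
  by move/(extT_wing n t U V hn ht wu pu wv pv).
by move/(extT_wing n t V U hn ht wv pv wu pu).
Qed.


Definition intv n t (U W : ind) : Prop :=
  rl n t W.1 < rl n t U.1 <= rl n t W.1 + W.2 /\ rl n t W.1 + W.2 < rl n t U.1 + U.2.

Lemma add_rigid n t T (V : ind) : 2 <= n -> t <= n -> rigid n T ->
  rl n t V.1 + V.2 <= n.-1 -> 0 < V.2 ->
  (forall W : ind, W \in T -> rl n t W.1 + W.2 <= n.-1 /\ 0 < W.2) ->
  (forall W : ind, W \in T -> ~ intv n t V W /\ ~ intv n t W V) ->
  rigid n (V :: T).
Proof.
move=> hn ht rig wv pv wT hV U U'; rewrite !inE => /orP[/eqP->|hU] /orP[/eqP->|hU'].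
- apply: (noC n t _ _ hn ht wv pv wv pv); lia.
- have [w1 w2] := wT U' hU'; have [h1 h2] := hV U' hU'.
  exact: (noC n t _ _ hn ht wv pv w1 w2 h1 h2).
- have [w1 w2] := wT U hU; have [h1 h2] := hV U hU.
  exact: (noC n t _ _ hn ht w1 w2 wv pv h2 h1).
- exact: rig.
Qed.

Lemma arithY x L a b c d w e :
  0 < b -> 0 < d -> 0 < e -> a = c + d + 1 -> x <= c -> a + b <= x + L ->
  ~ (x < w <= x + L /\ x + L < w + e) ->
  ~ (w < x <= w + e /\ w + e < x + L) ->
  ~ (a < w <= a + b /\ a + b < w + e) ->
  ~ (w < a <= w + e /\ w + e < a + b) ->
  ~ (c < w <= c + d /\ c + d < w + e) ->
  ~ (w < c <= w + e /\ w + e < c + d) ->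
  (w <= c -> a + b <= w + e -> L <= e) ->
  [/\ ~ (x < w <= c + d /\ c + d < w + e), ~ (w < x <= w + e /\ w + e < c + d),
      ~ (a < w <= x + L /\ x + L < w + e) & ~ (w < a <= w + e /\ w + e < x + L)].
Proof. move=> *; split; lia. Qed.
Theorem lemma2p9 (n : nat) (T : seq ind) (T1 Ti Tj : ind) :
  2 <= n ->
  basic_maximal_rigid n T ->
  T1 \in T -> T1.2 = n.-1 ->
  Ti \in T -> Tj \in T ->
  (Dmap n Ti Tj <->
     ((exists Tx Ty Tz : ind, T_subwing_triple n T Tx Ty Tz /\
                              left_edge n Tz Ti /\ right_edge n Ty Tj)
      \/ (left_edge n T1 Ti /\ right_edge n T1 Tj))).
Proof.
move=> hn [allv [uq [rig maxi]]] hT1 hT1len hTi hTj.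
have vT : forall X : ind, X \in T -> X.1 < n /\ 0 < X.2.
  by move=> X hX; have := allP allv X hX => /andP[].
have [ht _] := vT T1 hT1.
set t := T1.1 in ht *.
have ht' : t <= n by lia.
have rt : rl n t t = 0 by apply: rl_t.
have wing : forall X : ind, X \in T -> rl n t X.1 + X.2 <= n.-1.
  move=> X hX; have [hx1 hx2] := vT X hX.
  have := rig X X hX hX; have := rig X T1 hX hT1.
  rewrite /extC !negb_or => /andP[/negP e1 _] /andP[/negP e2 _].
  have hrx : rl n t X.1 < n by apply: rl_lt; lia.
  have hb : X.2 <= n.-1.
    rewrite leqNgt; apply/negP => hb; apply: e2.
    rewrite /extT (homT_rel n t) //; have -> : (tau n X).2 = X.2 by [].
    exists (X.2 - n.-1); split; try lia.
    rewrite rl_tau; congr (_ %% _); lia.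
  rewrite leqNgt; apply/negP => hw; apply: e1.
  rewrite /extT (homT_rel n t) //; have -> : (tau n X).2 = X.2 by [].
  exists (n - rl n t X.1); split; try lia.
  rewrite rl_tau rt hT1len mod1; try lia.
  case: ifP => hh; last lia.
  rewrite modn_small; lia.
have cmp : forall X Y : ind, X \in T -> Y \in T ->
    ~ (rl n t Y.1 < rl n t X.1 <= rl n t Y.1 + Y.2 /\ rl n t Y.1 + Y.2 < rl n t X.1 + X.2).
  move=> X Y hX hY; have := rig X Y hX hY; rewrite /extC negb_or => /andP[/negP e _] hh.
  apply: e; apply/(extT_wing n t X Y hn ht' (wing X hX) (proj2 (vT X hX)) (wing Y hY) (proj2 (vT Y hY))).
  exact: hh.
have [hi1 hi2] := vT Ti hTi; have [hj1 hj2] := vT Tj hTj.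
have wi := wing Ti hTi; have wj := wing Tj hTj.
have w1 := wing T1 hT1.
have Dw := Dmap_wing n t Ti Tj hn ht' wi hi2 wj hj2.
rewrite Dw; clear Dw.
set a := rl n t Ti.1 in wi *.
set c := rl n t Tj.1 in wj *.
set b := Ti.2 in hi2 wi *.
set d := Tj.2 in hj2 wj *.
have rT1 : rl n t T1.1 = 0 by [].
split.
- case=> [[h1 h2]|[h1 h2]]; last first.
    right; split; split; try lia.
    + apply: (rl_inj n t _ _ ht') => //; rewrite rt; exact: h1.
    + rewrite hT1len; apply: (rl_inj n t _ _ ht') => //; first by apply: ltn_pmod; lia.
      rewrite rl_mod.
      have -> : t + n.-1 - d = t + (n.-1 - d) by lia.
      rewrite rl_add rt modn_small; lia.
  have ea : a = c + d + 1.
    have := cmp Ti Tj hTi hTj; rewrite -/a -/b -/c -/d => hc.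
    case: (leqP a (c + d)) => h; last lia.
    by exfalso; apply: hc; lia.
  left.
  pose P := fun m => has (fun X : ind => (rl n t X.1 <= c) && (a + b <= rl n t X.1 + X.2) && (X.2 == m)) T.
  have Pex : exists m, P m.
    exists T1.2; apply/hasP; exists T1 => //; rewrite rT1 hT1len eqxx andbT leq0n /=; lia.
  case: (ex_minnP Pex) => m hm hmin.
  have [Tx [hTx hx1 hx2 hx3]] : exists Tx : ind,
      [/\ Tx \in T, rl n t Tx.1 <= c, a + b <= rl n t Tx.1 + Tx.2 & Tx.2 = m].
    by case/hasP: hm => X hX /andP[/andP[h1' h2'] /eqP h3']; exists X.
  have mn : forall W : ind, W \in T -> rl n t W.1 <= c -> a + b <= rl n t W.1 + W.2 -> m <= W.2.
    move=> W hW h1' h2'; apply: hmin; apply/hasP; by exists W => //; rewrite h1' h2' eqxx.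
  have wx := wing Tx hTx; have [vx1 vx2] := vT Tx hTx.
  have wT : forall W : ind, W \in T -> rl n t W.1 + W.2 <= n.-1 /\ 0 < W.2.
    by move=> W hW; split; [apply: wing | case: (vT W hW)].
  have key : forall W : ind, W \in T ->
    [/\ ~ (rl n t Tx.1 < rl n t W.1 <= c + d /\ c + d < rl n t W.1 + W.2),
         ~ (rl n t W.1 < rl n t Tx.1 <= rl n t W.1 + W.2 /\ rl n t W.1 + W.2 < c + d),
         ~ (a < rl n t W.1 <= rl n t Tx.1 + Tx.2 /\ rl n t Tx.1 + Tx.2 < rl n t W.1 + W.2) &
         ~ (rl n t W.1 < a <= rl n t W.1 + W.2 /\ rl n t W.1 + W.2 < rl n t Tx.1 + Tx.2)].
    move=> W hW; have [_ we] := wT W hW.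
    apply: (arithY _ _ _ _ _ _ _ _ hi2 hj2 we ea hx1 hx2).
    - exact: (cmp W Tx hW hTx).
    - exact: (cmp Tx W hTx hW).
    - exact: (cmp W Ti hW hTi).
    - exact: (cmp Ti W hTi hW).
    - exact: (cmp W Tj hW hTj).
    - exact: (cmp Tj W hTj hW).
    - by move=> h1' h2'; rewrite hx3; apply: mn.
  pose Y : ind := (Tx.1, c + d - rl n t Tx.1).
  pose Z : ind := ((Tx.1 + (c + d - rl n t Tx.1) + 1) %% n, Tx.2 - (c + d - rl n t Tx.1) - 1).
  have rY : rl n t Y.1 = rl n t Tx.1 by [].
  have rZ : rl n t Z.1 = a.
    rewrite /Z /= rl_mod !rl_add modnDml modn_small; lia.
  have hY : Y \in T.
    apply: maxi; first by rewrite /valid /=; apply/andP; split; lia.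
    apply: (add_rigid _ _ _ _ hn ht' rig) => //; rewrite ?rY /=; try lia.
    move=> W hW; have [k1 k2 _ _] := key W hW; rewrite /intv rY /=.
    split => hh; [apply: k2 | apply: k1]; lia.
  have hZ : Z \in T.
    apply: maxi; first by rewrite /valid /=; apply/andP; split; [apply: ltn_pmod|]; lia.
    apply: (add_rigid _ _ _ _ hn ht' rig) => //; rewrite ?rZ /=; try lia.
    move=> W hW; have [_ _ k3 k4] := key W hW; rewrite /intv rZ /=.
    split => hh; [apply: k4 | apply: k3]; lia.
  have sw : subwing_triple n Tx Y Z.
    split; first lia.
    by exists (c + d - rl n t Tx.1); split => //; lia.
  have le : left_edge n Z Ti.
    split; last (rewrite /Z /=; lia).
    apply: (rl_inj n t _ _ ht') => //; first by apply: ltn_pmod; lia.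
  have re : right_edge n Y Tj.
    split; last (rewrite /Y /=; lia).
    apply: (rl_inj n t _ _ ht') => //; first by apply: ltn_pmod; lia.
    rewrite rl_mod /=.
    have -> : Tx.1 + (c + d - rl n t Tx.1) - d = Tx.1 + (c - rl n t Tx.1) by lia.
    rewrite rl_add modn_small; lia.
  by exists Tx, Y, Z; split.
- case=> [[Tx [Ty [Tz [[hx hy hz [hL [c' [hc [eY eZ]]]]] [[le1 le2] [re1 re2]]]]]]|[[le1 le2] [re1 re2]]].
    subst Ty Tz.
    have wx := wing Tx hx; have [hx1 hx2] := vT Tx hx.
    have ea : a = rl n t Tx.1 + c' + 1.
      rewrite /a le1 /= rl_shift rl_add modnDml -addnA modn_small; lia.
    have ec : c = rl n t Tx.1 + c' - d.
      rewrite /c re1 /=.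
      have -> : Tx.1 + c' - d = Tx.1 + (c' - d) by simpl in re2; lia.
      rewrite rl_shift modn_small; simpl in re2; lia.
    left; simpl in le2, re2; lia.
  right.
  have ea : a = 0 by rewrite /a le1.
  have ec : c = n.-1 - d.
    rewrite /c re1 hT1len.
    have -> : t + n.-1 - d = t + (n.-1 - d) by lia.
    rewrite rl_shift rt modn_small; lia.
  lia.
Qed.
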